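(* Let $a,b\in\{1,3,7,9\}$ with $a\neq b$, and let $7\le n\le 16$. Then $B_n(a,b)$ is not an absolute prime.
   Context: For a positive integer $N$ with decimal representation $d_1d_2\dots d_n$ (digits $d_k\in\{0,\dots,9\}$, $d_1\neq 0$), a permutation of the digits of $N$ is any integer $\sum_{k=1}^{n} d_{\sigma(k)}10^{n-k}$ with $\sigma$ a permutation of $\{1,\dots,n\}$. $N$ is called an absolute prime if every integer obtained by a permutation of the digits of $N$ (including $N$ itself) is prime. The repunit $A_n=(10^n-1)/9$. For digits $a,b$ and $n\ge 1$, $B_n(a,b)=a\cdot A_n+(b-a)$ is the $n$-digit integer whose first $n-1$ digits are $a$ and whose last digit is $b$. *)

(* Defs.v *)
From mathcomp Require Import all_boot.
Set Implicit Arguments. Unset Strict Implicit. Unset Printing Implicit Defensive.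

(* Decimal digits, least significant first; the fuel k = n is always enough. *)
Fixpoint rdigits (k n : nat) : seq nat :=
  match k with
  | 0 => [::]
  | k'.+1 => if n == 0 then [::] else n %% 10 :: rdigits k' (n %/ 10)
  end.

Definition digits (N : nat) : seq nat := rev (rdigits N N).

Definition of_digits (s : seq nat) : nat := foldl (fun acc d => acc * 10 + d) 0 s.

Definition absolute_prime (N : nat) : Prop :=
  0 < N /\ forall s : seq nat, perm_eq s (digits N) -> prime (of_digits s).

Definition repunit (n : nat) : nat := (10 ^ n - 1) %/ 9.

(* B_n(a,b) = a * A_n + (b - a); computed as (a*A_n + b) - a, which is exact
   for n >= 1 since a * A_n >= a. *)
Definition B (n a b : nat) : nat := a * repunit n + b - a.

Example B_test : B 3 1 7 = 117. Proof. by []. Qed.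
Example digits_test : digits 1234 = [:: 1; 2; 3; 4]. Proof. by vm_compute. Qed.
Example of_digits_test : of_digits [:: 1; 2; 3; 4] = 1234. Proof. by []. Qed.

(* Main.v *)
Require Import Defs.
From mathcomp Require Import all_boot zify.

Definition odf (acc : nat) (s : seq nat) := foldl (fun acc d => acc * 10 + d) acc s.

Lemma odf_acc acc s : odf acc s = acc * 10 ^ size s + odf 0 s.
Proof.
elim: s acc => [|d s IH] acc /=; first by rewrite expn0 muln1 addn0.
rewrite IH [in RHS]IH expnS. lia.
Qed.

Lemma of_digits_cat s1 s2 : of_digits (s1 ++ s2) = of_digits s1 * 10 ^ size s2 + of_digits s2.
Proof. by rewrite /of_digits foldl_cat -/(odf _ s2) odf_acc. Qed.

Lemma of_digits_take k s : of_digits (take k s) <= of_digits s.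
Proof.
rewrite -{2}(cat_take_drop k s) of_digits_cat.
have : 0 < 10 ^ size (drop k s) by rewrite expn_gt0.
nia.
Qed.

Definition modf p := foldl (fun acc d => (acc * 10 + d) %% p).

Lemma modf_ok p s acc : odf acc s %% p = modf p (acc %% p) s %% p.
Proof.
elim: s acc => [|d s IH] acc /=; first by rewrite modn_mod.
rewrite IH; congr (modf _ _ _ %% _).
by rewrite -[in LHS]modnDml -[in RHS]modnDml modnMml.
Qed.

Definition witness p s := (1 < p) && (p < of_digits (take 3 s)) && (modf p 0 s %% p == 0).

Lemma witness_ok p s : witness p s -> ~ prime (of_digits s).
Proof.
move=> /andP[/andP[p1 pl] pm] pr.
have dv : p %| of_digits s by rewrite /dvdn; move: (modf_ok p s 0); rewrite mod0n => ->.
have := of_digits_take 3 s.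
have p1' : p != 1 by case: p p1 {pl pm dv} => [|[|]].
have := prime_nt_dvdP pr p1' dv => <-. lia.
Qed.

Definition rv (r : seq nat) := foldr (fun d acc => acc * 10 + d) 0 r.

Lemma of_digits_rev r : of_digits (rev r) = rv r.
Proof. by rewrite /of_digits foldl_rev. Qed.

Lemma rv_pos r : r != [::] -> last 1 r != 0 -> 0 < rv r.
Proof.
elim: r => [|d r IH] //= _.
move: IH; case: r => [|e r] IH /=; first by rewrite lt0n.
move=> H; have /= := IH isT H. lia.
Qed.

Lemma size_le_rv r : last 1 r != 0 -> size r <= rv r.
Proof.
elim: r => [|d r IH] //=.
move: IH; case: r => [|e r] IH /=; first by rewrite lt0n.
move=> H; have /= := IH H. lia.
Qed.

Lemma rdigits_rv k r : all (fun d => d < 10) r -> last 1 r != 0 -> size r <= k ->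
  rdigits k (rv r) = r.
Proof.
elim: r k => [|d r IH] k /=.
  by case: k.
move=> /andP[d10 ar] hl.
case: k => [|k] //= hk.
have hpos : 0 < rv (d :: r) by apply: rv_pos.
have -> : (rv r * 10 + d == 0) = false by apply/negbTE; rewrite -lt0n.
rewrite modnMDl modn_small // divnMDl // divn_small // addn0 IH //.
by case: r {IH ar hpos hk} hl.
Qed.

Lemma rv_nseq1 n : 9 * rv (nseq n 1) = 10 ^ n - 1.
Proof.
elim: n => [|n IH] //=.
rewrite expnS. have : 0 < 10 ^ n by rewrite expn_gt0. lia.
Qed.

Lemma rv_nseq a n : a * rv (nseq n 1) = rv (nseq n a).
Proof. elim: n => [|n IH] /=; first by rewrite muln0.
rewrite -IH. lia. Qed.

Lemma B_rv m a b : B m.+1 a b = rv (b :: nseq m a).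
Proof.
have hr : repunit m.+1 = rv (nseq m.+1 1) by rewrite /repunit -rv_nseq1 mulKn.
rewrite /B hr /= -(rv_nseq a m). lia.
Qed.

Lemma digits_B m a b : 0 < a < 10 -> b < 10 -> 0 < m ->
  digits (B m.+1 a b) = rcons (nseq m a) b.
Proof.
move=> /andP[a0 a10] b10 m0.
have hl : last 1 (b :: nseq m a) != 0.
  case: m m0 => [|m] //= _.
  have -> : last a (nseq m a) = a by elim: m.
  by rewrite -lt0n.
have ha : all (fun d => d < 10) (b :: nseq m a).
  by rewrite /= b10 /=; apply/allP => x /nseqP [-> _].
rewrite /digits B_rv rdigits_rv //; last exact: size_le_rv.
by rewrite rev_cons rev_nseq.
Qed.

Definition cands n (a b : nat) := [seq nseq i a ++ b :: nseq (n.-1 - i) a | i <- iota 0 n].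

Definition good n a b := has (fun s => has (fun p => witness p s) (iota 2 28)
   && perm_eq s (rcons (nseq n.-1 a) b)) (cands n a b).

Lemma good_ok n a b : 0 < a < 10 -> b < 10 -> 1 < n -> good n a b ->
  ~ absolute_prime (B n a b).
Proof.
move=> ha hb; case: n => [|m] // hm /hasP [s _ /andP [/hasP [p _ hw] hp]] [_ H].
have W := witness_ok p s hw. apply: W. apply: H.
rewrite digits_B //.
Qed.

Theorem lemma7 (a b n : nat) :
  a \in [:: 1; 3; 7; 9] -> b \in [:: 1; 3; 7; 9] -> a != b ->
  7 <= n <= 16 -> ~ absolute_prime (B n a b).
Proof.
move=> ha hb hab hn.
have hall : all (fun n => all (fun a => all (fun b => (a == b) || good n a b)
   [:: 1; 3; 7; 9]) [:: 1; 3; 7; 9]) (iota 7 10) by vm_compute.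
have hn' : n \in iota 7 10 by rewrite mem_iota; lia.
move/allP: hall => /(_ n hn') /allP /(_ a ha) /allP /(_ b hb).
rewrite (negbTE hab) /= => hg.
apply: good_ok => //.
- by move: ha; rewrite !inE => /or4P [] /eqP ->.
- by move: hb; rewrite !inE => /or4P [] /eqP ->.
- lia.
Qed.
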